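(* Let $F=\{T_1,\dots,T_t\}$ be a random forest with $t\ge 1$ and, for an input $x\in\mathcal{D}$, let $L_x$ be the labelling of the explanation BAG $\mathcal{B}_F$ defined by: a feature argument $A_{X_i\in S_{i,j}}$ is $\mathrm{in}$ if $x_i\in S_{i,j}$ and $\mathrm{out}$ otherwise; a rule argument $A_{T,r}$ is $\mathrm{in}$ if $r$ is the active rule in $T$ for $x$ and $\mathrm{out}$ otherwise; a class argument is $\mathrm{in}$ if its supporters dominate its attackers, $\mathrm{out}$ if its attackers dominate its supporters, and $\mathrm{und}$ otherwise. Then (1) for every $x\in\mathcal{D}$, $L_x$ is a bi-complete labelling of $\mathcal{B}_F$; (2) there is at most one $y\in\mathcal{C}$ with $L_x(A_y)=\mathrm{in}$, and if $L_x(A_y)=\mathrm{in}$ for some $y\in\mathcal{C}$, then $L_x(A_{y'})=\mathrm{out}$ for all $y'\in\mathcal{C}\setminus\{y\}$.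
   Context: Features $X_1,\dots,X_k$ have domains $D_1,\dots,D_k$; each feature is categorical (finite domain) or numerical ($D_i\subseteq\mathbb{R}$). Inputs are $x=(x_1,\dots,x_k)\in\mathcal{D}=D_1\times\dots\times D_k$; $\mathcal{C}$ is a finite set of class labels. Feature conditions are $X_i=v$ (categorical) or $X_i\le v$ (numerical); a feature literal is a condition or its negation. A rule $r$ is $\mathrm{prem}(r)\rightarrow\mathrm{conc}(r)$ with $\mathrm{prem}(r)$ a finite set of feature literals and $\mathrm{conc}(r)\in\mathcal{C}$. A decision tree $T$ is a finite set of rules such that every input satisfies the premise of exactly one rule of $T$, the active rule in $T$ for $x$. A random forest is a finite set of decision trees. Domain partition: for a categorical feature, the singletons $\{v\}$, $v\in D_i$; for a numerical feature with distinct thresholds $v_1<\dots<v_m$ occurring in conditions $X_i\le v$ in $F$, the sets $D_i\cap(-\infty,v_1]$, $D_i\cap(v_{j-1},v_j]$ ($2\le j\le m$), $D_i\cap(v_m,\infty)$; denote them $S_{i,1},\dots,S_{i,n_i}$. A BAG is $(\mathcal{A},\mathrm{Att},\mathrm{Sup})$ with $\mathcal{A}$ finite and $\mathrm{Att},\mathrm{Sup}\subseteq\mathcal{A}\times\mathcal{A}$; $\mathrm{Att}(A)=\{B:(B,A)\in\mathrm{Att}\}$, $\mathrm{Sup}(A)=\{B:(B,A)\in\mathrm{Sup}\}$. A labelling is a map $L:\mathcal{A}\to\{\mathrm{in},\mathrm{out},\mathrm{und}\}$. The attackers of $A$ dominate its supporters if $|\{B\in\mathrm{Att}(A):L(B)=\mathrm{in}\}|>|\{B\in\mathrm{Sup}(A):L(B)\ne\mathrm{out}\}|$;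 the supporters dominate the attackers if $|\{B\in\mathrm{Sup}(A):L(B)=\mathrm{in}\}|>|\{B\in\mathrm{Att}(A):L(B)\ne\mathrm{out}\}|$. $L$ is bi-complete if for every $A$: $L(A)=\mathrm{in}$ iff ($L(B)=\mathrm{out}$ for all $B\in\mathrm{Att}(A)$ or $A$'s supporters dominate its attackers), and $L(A)=\mathrm{out}$ iff $A$'s attackers dominate its supporters. The explanation BAG $\mathcal{B}_F$ has arguments: a class argument $A_y$ for each $y\in\mathcal{C}$; a rule argument $A_{T,r}$ for each $T\in F$, $r\in T$; a feature argument $A_{X_i\in S_{i,j}}$ for each feature $i$ and partition set $S_{i,j}$. Attacks: between any two distinct feature arguments of the same feature; from $A_{X_i\in S_{i,j}}$ to $A_{T,r}$ whenever some literal in $\mathrm{prem}(r)$ is satisfied by no value in $S_{i,j}$; from $A_{T,r}$ to $A_y$ whenever $\mathrm{conc}(r)\ne y$. Supports: from $A_{T,r}$ to $A_y$ whenever $\mathrm{conc}(r)=y$. No other attacks or supports. *)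

(* Defs.v *)
From HB Require Import structures.
From mathcomp Require Import all_boot all_order all_algebra.
From mathcomp Require Import boolp reals.
Set Implicit Arguments. Unset Strict Implicit. Unset Printing Implicit Defensive.
Import Order.TTheory GRing.Theory Num.Theory.
Local Open Scope ring_scope.

(* [bag_att B b a] means (b, a) \in Att, i.e. b attacks a.             *)
Record bag (A : eqType) := Bag {
  bag_args : seq A;
  bag_att : A -> A -> bool;
  bag_sup : A -> A -> bool }.

Inductive label := lin | lout | lund.

Definition is_in (l : label) : bool := if l is lin then true else false.
Definition is_out (l : label) : bool := if l is lout then true else false.

Section BAGDefs.
Variable A : eqType.
Variable B : bag A.
Variable L : A -> label.

Definition n_att_in (a : A) : nat :=
  count (fun b => bag_att B b a && is_in (L b)) (bag_args B).
Definition n_att_nout (a : A) : nat :=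
  count (fun b => bag_att B b a && ~~ is_out (L b)) (bag_args B).
Definition n_sup_in (a : A) : nat :=
  count (fun b => bag_sup B b a && is_in (L b)) (bag_args B).
Definition n_sup_nout (a : A) : nat :=
  count (fun b => bag_sup B b a && ~~ is_out (L b)) (bag_args B).

Definition att_dom (a : A) : bool := (n_sup_nout a < n_att_in a)%N.
Definition sup_dom (a : A) : bool := (n_att_nout a < n_sup_in a)%N.

Definition bicomplete : Prop :=
  forall a, a \in bag_args B ->
    (L a = lin <->
       ((forall b, b \in bag_args B -> bag_att B b a -> L b = lout) \/ sup_dom a))
    /\ (L a = lout <-> att_dom a).

End BAGDefs.

Section Forests.
(* R: the reals; V: a finite type holding all categorical values;      *)
Variables (R : realType) (V C : finType) (k : nat).

(* A feature value: inl r (numerical value r) or inr v (categorical v). *)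
Definition value := (R + V)%type.
Definition input := 'I_k -> value.

(* A feature condition on feature i: (i, inl v) is "X_i = v",          *)
(* (i, inr t) is "X_i <= t".                                            *)
Definition cond := ('I_k * (V + R))%type.
(* A feature literal: (true, c) is the condition c, (false, c) is its  *)
(* negation.                                                            *)
Definition literal := (bool * cond)%type.
Definition rule := (seq literal * C)%type.
Definition prem (r : rule) : seq literal := r.1.
Definition conc (r : rule) : C := r.2.
Definition tree := seq rule.
Definition forest := seq tree.

Definition litfeat (l : literal) : 'I_k := l.2.1.

Definition cond_sat (c : V + R) (w : value) : bool :=
  match c, w with
  | inl v, inr v' => v' == v
  | inr t, inl r => r <= t
  | _, _ => false
  end.

Definition lit_sat (l : literal) (w : value) : bool :=
  if l.1 then cond_sat l.2.2 w else ~~ cond_sat l.2.2 w.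

Definition rule_sat (x : input) (r : rule) : bool :=
  all (fun l => lit_sat l (x (litfeat l))) (prem r).

(* Feature kinds and domains: isnum i = feature i is numerical;        *)
(* Dn i is the domain D_i (a subset of R) of a numerical feature;      *)
(* Dc i is the (finite) domain D_i of a categorical feature.           *)
Variable isnum : 'I_k -> bool.
Variable Dn : 'I_k -> pred R.
Variable Dc : 'I_k -> {set V}.

Definition in_domain (x : input) : Prop :=
  forall i, match x i with
            | inl r => isnum i && Dn i r
            | inr v => ~~ isnum i && (v \in Dc i)
            end.

Definition wf_literal (l : literal) : bool :=
  match l.2.2 with
  | inl _ => ~~ isnum (litfeat l)
  | inr _ => isnum (litfeat l)
  end.

Definition is_tree (T : tree) : Prop :=
  uniq T /\ (forall r, r \in T -> all wf_literal (prem r)) /\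
  (forall x, in_domain x -> exists! r, r \in T /\ rule_sat x r).

Definition active (T : tree) (x : input) (r : rule) : bool :=
  (r \in T) && rule_sat x r.

Definition is_forest (F : forest) : Prop :=
  uniq F /\ (forall T, T \in F -> is_tree T).

Definition lit_thr (i : 'I_k) (l : literal) : seq R :=
  match l.2 with
  | (i', inr t) => if i' == i then [:: t] else [::]
  | _ => [::]
  end.

Definition thresholds (F : forest) (i : 'I_k) : seq R :=
  sort <=%R (undup (flatten [seq flatten [seq lit_thr i l | l <- prem r]
                                | r <- flatten F])).

(* j-th interval (j = 0 .. m, 0-indexed) determined by sorted s = [v_1..v_m]: *)
(* j = 0: (-oo, v_1]; 0 < j < m: (v_j, v_{j+1}]; j = m: (v_m, +oo);   *)
(* when m = 0 the single interval is all of R.                          *)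
Definition in_interval (s : seq R) (j : nat) (r : R) : bool :=
  ((j == 0)%N || (nth 0 s j.-1 < r)) && ((j == size s) || (r <= nth 0 s j)).

(* Argument names: class arguments A_y, rule arguments A_{T,r},        *)
(* categorical feature arguments A_{X_i in {v}} and numerical feature   *)
(* arguments A_{X_i in S_{i,j}} (j = 0 .. m).                           *)
Inductive arg :=
  | AClass of C
  | ARule of tree & rule
  | AFeatC of 'I_k & V
  | AFeatN of 'I_k & nat.

Definition arg_code (a : arg) :=
  match a with
  | AClass y => inl (inl y)
  | ARule T r => inl (inr (T, r))
  | AFeatC i v => inr (inl (i, v))
  | AFeatN i j => inr (inr (i, j))
  end.
Definition arg_decode c : arg :=
  match c with
  | inl (inl y) => AClass y
  | inl (inr (T, r)) => ARule T r
  | inr (inl (i, v)) => AFeatC i v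
  | inr (inr (i, j)) => AFeatN i j
  end.
Lemma arg_codeK : cancel arg_code arg_decode. Proof. by case. Qed.
HB.instance Definition _ := Equality.copy arg (can_type arg_codeK).

Definition featof (a : arg) : option 'I_k :=
  match a with
  | AFeatC i _ | AFeatN i _ => Some i
  | _ => None
  end.

Definition is_feat (a : arg) : bool := featof a != None.

Definition partset (F : forest) (a : arg) : pred value :=
  match a with
  | AFeatC i v => fun w => w == inr v
  | AFeatN i j => fun w => if w is inl r
                           then Dn i r && in_interval (thresholds F i) j r
                           else false
  | _ => fun _ => false
  end.

Definition args (F : forest) : seq arg :=
  [seq AClass y | y <- enum C]
  ++ [seq ARule T r | T <- F, r <- T]
  ++ flatten [seq (if isnum i
                   then [seq AFeatN i j | j <- iota 0 (size (thresholds F i)).+1]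
                   else [seq AFeatC i v | v <- enum (Dc i)])
             | i <- enum 'I_k].

Definition att (F : forest) (b a : arg) : bool :=
  match b, a with
  | AClass _, _ => false
  | ARule _ r, AClass y => conc r != y
  | ARule _ _, _ => false
  | _, AClass _ => false
  | _, ARule _ r =>
      `[< exists l, l \in prem r /\ Some (litfeat l) = featof b /\
                    forall w, partset F b w -> ~~ lit_sat l w >]
  | _, _ => (featof b == featof a) && (b != a)
  end.

Definition sup (F : forest) (b a : arg) : bool :=
  match b, a with
  | ARule _ r, AClass y => conc r == y
  | _, _ => false
  end.

Definition BF (F : forest) : bag arg := Bag (args F) (att F) (sup F).

Definition Lbase (F : forest) (x : input) (a : arg) : label :=
  match a with
  | AClass _ => lund
  | ARule T r => if active T x r then lin else lout
  | AFeatC i _ | AFeatN i _ => if partset F a (x i) then lin else lout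
  end.

(* supporters of a class argument are rule arguments, labelled by Lbase)*)
Definition Lx (F : forest) (x : input) (a : arg) : label :=
  match a with
  | AClass _ =>
      if sup_dom (BF F) (Lbase F x) a then lin
      else if att_dom (BF F) (Lbase F x) a then lout
      else lund
  | _ => Lbase F x a
  end.

End Forests.

(* Main.v *)
Require Import Defs.
From HB Require Import structures.
From mathcomp Require Import all_boot all_order all_algebra.
From mathcomp Require Import boolp reals.
From mathcomp Require Import zify.
Set Implicit Arguments. Unset Strict Implicit. Unset Printing Implicit Defensive.
Import Order.TTheory GRing.Theory Num.Theory.
Local Open Scope ring_scope.

Section Intervals.
Variable R : realType.

Lemma interval_exists (s : seq R) (r : R) :
  exists2 j, (j <= size s)%N & in_interval s j r.
Proof.
exists (find (fun t => r <= t) s); first exact: find_size.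
rewrite /in_interval; apply/andP; split.
  case: (find _ _) (@before_find _ 0 (fun t => r <= t) s) => [//|j] H.
  by rewrite /= ltNge H.
case: (boolP (has (fun t => r <= t) s)) => Hh.
  by rewrite (nth_find 0 Hh) orbT.
by rewrite (hasNfind Hh) eqxx.
Qed.

Lemma interval_cmp (s : seq R) j r m :
  sorted <=%R s -> (j <= size s)%N -> in_interval s j r -> (m < size s)%N ->
  (r <= nth 0 s m) = (j <= m)%N.
Proof.
move=> so js /andP [H1 H2] ms.
have hom := sorted_leq_nth le_trans lexx 0 so.
case: (leqP j m) => jm.
  have jlt : (j < size s)%N by apply: leq_ltn_trans ms.
  move: H2; rewrite (ltn_eqF jlt) /= => H2.
  by apply: le_trans H2 _; apply: hom => //; rewrite inE.
have j0 : (j != 0)%N by case: j jm {js H1 H2}.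
move: H1.
rewrite (negbTE j0) /= => H1.
apply/negbTE; rewrite -ltNge.
clear H2; apply: le_lt_trans H1; apply: hom; rewrite ?inE //.
- by case: j jm js {j0} => // j /=; rewrite ltnS => _ /ltnW.
- by case: j jm {js j0}.
Qed.

Lemma interval_disj (s : seq R) j j' r :
  sorted <=%R s -> (j <= size s)%N -> (j' <= size s)%N ->
  in_interval s j r -> in_interval s j' r -> j = j'.
Proof.
move=> so.
wlog: j j' / (j <= j')%N.
  move=> W js js' I I'; case: (leqP j j') => h; first exact: W.
  by apply/esym/W => //; apply: ltnW.
move=> le js js' I I'; apply/eqP; rewrite eqn_leq le /=.
case: (leqP j' j) => // lt.
have jl : (j < size s)%N by apply: leq_trans js'.
have := interval_cmp so js I jl; have := interval_cmp so js' I' jl.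
by rewrite leqnn (leqNgt j' j) lt => ->.
Qed.

End Intervals.


Section Bag.
Variables (A : eqType) (B : bag A) (L : A -> label).

Lemma in_nout b : is_in (L b) -> ~~ is_out (L b).
Proof. by case: (L b). Qed.

Lemma sup_att_dom a : sup_dom B L a -> att_dom B L a -> False.
Proof.
rewrite /sup_dom /att_dom => h1 h2.
have e1 : (n_att_in B L a <= n_att_nout B L a)%N.
  by apply: sub_count => b /andP [-> /in_nout].
have e2 : (n_sup_in B L a <= n_sup_nout B L a)%N.
  by apply: sub_count => b /andP [-> /in_nout].
lia.
Qed.

Lemma gen_bicomp a :
  (forall b, ~~ bag_sup B b a) -> L a <> lund ->
  (L a = lin -> forall b, b \in bag_args B -> bag_att B b a -> L b = lout) ->
  (L a = lout -> exists2 b, b \in bag_args B & bag_att B b a && is_in (L b)) ->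
  (L a = lin <->
       ((forall b, b \in bag_args B -> bag_att B b a -> L b = lout) \/ sup_dom B L a))
    /\ (L a = lout <-> att_dom B L a).
Proof.
move=> nsup nund P1 P2.
have nsd : ~~ sup_dom B L a.
  rewrite /sup_dom /n_sup_in (@eq_count _ _ pred0); first by rewrite count_pred0.
  by move=> b; rewrite (negbTE (nsup b)).
have ad : att_dom B L a <-> exists2 b, b \in bag_args B & bag_att B b a && is_in (L b).
  rewrite /att_dom /n_sup_nout (@eq_count _ _ pred0); last first.
    by move=> b; rewrite (negbTE (nsup b)).
  rewrite count_pred0 -has_count; split.
    by case/hasP => b bin /andP [h1 h2]; exists b => //; rewrite h1.
  by case=> b bin /andP [h1 h2]; apply/hasP; exists b => //; rewrite h1.
case E: (L a) nund P1 P2 => // _ P1 P2.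
- split; first by split=> // _; left; exact: P1.
  split=> // /ad [b bin /andP [h1 h2]].
  by move: (P1 erefl b bin h1) h2 => ->.
- have [b bin /andP [h1 h2]] := P2 erefl.
  split; last by split=> // _; apply/ad; exists b => //; rewrite h1.
  split=> // -[H|H]; last by rewrite H in nsd.
  by move: (H b bin h1) h2 => ->.
Qed.

End Bag.


Section Forest.
Variables (R : realType) (V C : finType) (k : nat).
Variables (isnum : 'I_k -> bool) (Dn : 'I_k -> pred R) (Dc : 'I_k -> {set V}).
Variable F : forest R V C k.

Local Notation args := (@args R V C k isnum Dc F).

Lemma mem_argsC i v :
  (AFeatC R C i v \in args) = ~~ isnum i && (v \in Dc i).
Proof.
rewrite /Defs.args !mem_cat.
have -> : (AFeatC R C i v \in [seq AClass R V k y | y <- enum C]) = false.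
  by apply/mapP => -[].
have -> : (AFeatC R C i v \in [seq ARule T r | T <- F, r <- T]) = false.
  by apply/allpairsPdep => -[? [? []]].
apply/flatten_mapP/andP.
- case=> i' _; case: ifP => Hn /mapP [z Hz E]; case: E => // E1 E2.
  by subst; rewrite Hn -mem_enum.
- case=> Hn Hv; exists i; first by rewrite mem_enum.
  by rewrite (negbTE Hn); apply/mapP; exists v => //; rewrite mem_enum.
Qed.

Lemma mem_argsN i j :
  (AFeatN R V C i j \in args) = isnum i && (j <= size (thresholds F i))%N.
Proof.
rewrite /Defs.args !mem_cat.
have -> : (AFeatN R V C i j \in [seq AClass R V k y | y <- enum C]) = false.
  by apply/mapP => -[].
have -> : (AFeatN R V C i j \in [seq ARule T r | T <- F, r <- T]) = false.
  by apply/allpairsPdep => -[? [? []]].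
apply/flatten_mapP/andP.
- case=> i' _; case: ifP => Hn /mapP [z Hz E]; case: E => // E1 E2.
  by subst; rewrite Hn; move: Hz; rewrite mem_iota add0n ltnS.
- case=> Hn Hv; exists i; first by rewrite mem_enum.
  by rewrite Hn; apply/mapP; exists j => //; rewrite mem_iota add0n ltnS.
Qed.

Lemma mem_argsR T r :
  (ARule T r \in args) = (T \in F) && (r \in T).
Proof.
rewrite /Defs.args !mem_cat.
have -> : (ARule T r \in [seq AClass R V k y | y <- enum C]) = false.
  by apply/mapP => -[].
have -> : (ARule T r \in flatten [seq (if isnum i
                   then [seq AFeatN R V C i j | j <- iota 0 (size (thresholds F i)).+1]
                   else [seq AFeatC R C i v | v <- enum (Dc i)])
             | i <- enum 'I_k]) = false.
  by apply/flatten_mapP => -[i _]; case: ifP => _ /mapP [].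
rewrite orbF /=; apply/allpairsPdep/andP.
- by case=> T' [r' [h1 h2 [-> ->]]].
- by case=> h1 h2; exists T, r.
Qed.

Lemma mem_thr T r l :
  T \in F -> r \in T -> l \in prem r -> forall t, l.2.2 = inr t ->
  t \in thresholds F (litfeat l).
Proof.
move=> TF rT lr t lt.
rewrite /thresholds mem_sort mem_undup.
apply/flatten_mapP; exists r; first by apply/flattenP; exists T.
apply/flatten_mapP; exists l => //.
by case: l lt {lr} => b [i c] /= ->; rewrite /lit_thr /= eqxx inE.
Qed.

End Forest.


Section Main.
Variables (R : realType) (V C : finType) (k : nat).
Variables (isnum : 'I_k -> bool) (Dn : 'I_k -> pred R) (Dc : 'I_k -> {set V}).
Variable F : forest R V C k.
Hypothesis HF : is_forest isnum Dn Dc F.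
Variable x : input R V k.
Hypothesis Hx : in_domain isnum Dn Dc x.

Local Notation args := (@args R V C k isnum Dc F).
Local Notation L := (Lx isnum Dn Dc F x).

Lemma featL b i : featof b = Some i ->
  L b = if partset Dn F b (x i) then lin else lout.
Proof. by case: b => //= i' ? [->]. Qed.

Lemma thr_sorted i : sorted <=%R (thresholds F i).
Proof. by apply: sort_sorted; exact: le_total. Qed.

Lemma cell_uniq b1 b2 i : b1 \in args -> b2 \in args ->
  featof b1 = Some i -> featof b2 = Some i ->
  partset Dn F b1 (x i) -> partset Dn F b2 (x i) -> b1 = b2.
Proof.
case: b1 => // i1 a1; case: b2 => // i2 a2 /=; rewrite ?mem_argsC ?mem_argsN;
  move=> /andP [_ h1] /andP [_ h2] [E1] [E2]; subst.
all: case: (x _) => [r|v] //=.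
all: try by move=> /eqP [->] /eqP [->].
move=> /andP [_ I1] /andP [_ I2].
by rewrite (interval_disj (thr_sorted _) h1 h2 I1 I2).
Qed.

Lemma cell_ex i : exists b, [/\ b \in args, featof b = Some i,
  partset Dn F b (x i) &
  forall w, partset Dn F b w -> forall T r l, T \in F -> r \in T ->
     l \in prem r -> litfeat l = i -> lit_sat l w = lit_sat l (x i)].
Proof.
have := Hx i; case E: (x i) => [r|v] /andP [Hn Hd].
- have [j js ji] := interval_exists (thresholds F i) r.
  exists (AFeatN R V C i j); split => //.
  + by rewrite mem_argsN Hn js.
  + by rewrite /= Hd ji.
  move=> [r'|//] /= /andP [_ ji'] T r0 l TF rT lr li.
  have wf : wf_literal isnum l.
    by case: HF => _ /(_ T TF) [_ [/(_ r0 rT) /allP /(_ l lr) ? _]].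
  move: wf; rewrite /wf_literal li.
  case El : l.2.2 => [c|t]; first by rewrite Hn.
  move=> _.
  have tin := mem_thr TF rT lr El; rewrite li in tin.
  have so := thr_sorted i.
  have ix : (index t (thresholds F i) < size (thresholds F i))%N by rewrite index_mem.
  rewrite /lit_sat El /= -(nth_index 0 tin).
  by rewrite (interval_cmp so js ji ix) (interval_cmp so js ji' ix).
- exists (AFeatC R C i v); split => //.
  + by rewrite mem_argsC Hn.
  + by rewrite /= eqxx.
  by move=> w /= /eqP ->.
Qed.


Local Notation B := (BF isnum Dn Dc F).

Lemma att_feat b a : is_feat b -> is_feat a ->
  att Dn F b a = (featof b == featof a) && (b != a).
Proof. by case: b => // ? ?; case: a. Qed.

Lemma att_to_feat b a : is_feat a -> att Dn F b a -> is_feat b.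
Proof. by case: a => // ? ?; case: b. Qed.

Lemma att_rule b T r : is_feat b -> att Dn F b (ARule T r) =
  `[< exists l, l \in prem r /\ Some (litfeat l) = featof b /\
                    forall w, partset Dn F b w -> ~~ lit_sat l w >].
Proof. by case: b. Qed.

Lemma featL' b : is_feat b -> L b <> lund.
Proof. by case: b => //= i ?; case: ifP. Qed.

Lemma feat_bicomp a : a \in args -> is_feat a ->
  (L a = lin <->
       ((forall b, b \in bag_args B -> bag_att B b a -> L b = lout) \/ sup_dom B L a))
    /\ (L a = lout <-> att_dom B L a).
Proof.
move=> Ha fa.
have [i Ei] : exists i, featof a = Some i.
  by move: fa; rewrite /is_feat; case: (featof a) => // i _; exists i.
apply: gen_bicomp.
- by case: a Ha fa Ei => // ? ? ? ? ? [].
- exact: featL'.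
- rewrite (featL Ei); case: ifP => // Pa _ b Hb Hab.
  have fb := att_to_feat fa Hab.
  move: Hab; rewrite /= (att_feat fb fa) Ei => /andP [/eqP Eb nba].
  rewrite (featL Eb); case: ifP => // Pb.
  by rewrite (cell_uniq Hb Ha Eb Ei Pb Pa) eqxx in nba.
- rewrite (featL Ei); case: ifP => // Pa _.
  have [b [Hb Eb Pb _]] := cell_ex i.
  have fb : is_feat b by rewrite /is_feat Eb.
  exists b => //=; rewrite (att_feat fb fa) Eb Ei eqxx /= (featL Eb) Pb andbT.
  by apply/eqP => E; move: Pa; rewrite -E Pb.
Qed.

Lemma rule_bicomp T r : ARule T r \in args ->
  (L (ARule T r) = lin <->
       ((forall b, b \in bag_args B -> bag_att B b (ARule T r) -> L b = lout)
         \/ sup_dom B L (ARule T r)))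
    /\ (L (ARule T r) = lout <-> att_dom B L (ARule T r)).
Proof.
rewrite mem_argsR => /andP [TF rT].
apply: gen_bicomp.
- by case.
- by rewrite /=; case: ifP.
- rewrite /= /active rT /=; case: ifP => // Hs _ b Hb Hab.
  have fb : is_feat b by case: b Hb Hab.
  move: Hab; rewrite /= (att_rule _ _ fb) => /asboolP [l [lr [Eb H]]].
  rewrite (featL (esym Eb)); case: ifP => // Pb.
  by move: (H _ Pb); rewrite (allP Hs l lr).
- rewrite /= /active rT /=; case: ifP => // /negbT Hs _.
  have [l lr nl] := allPn Hs.
  have [b [Hb Eb Pb Hw]] := cell_ex (litfeat l).
  have fb : is_feat b by rewrite /is_feat Eb.
  exists b => //=; rewrite (att_rule _ _ fb) (featL Eb) Pb andbT.
  apply/asboolP; exists l; split => //; split => // w Pw.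
  by rewrite (Hw w Pw T r l TF rT lr erefl).
Qed.


Hypothesis Hsize : (1 <= size F)%N.

Local Notation AC y := (AClass R V k y).

Lemma Lclass y : L (AC y) =
  if sup_dom B L (AC y) then lin else if att_dom B L (AC y) then lout else lund.
Proof.
rewrite /= /sup_dom /att_dom.
have E1 : n_att_in B L (AC y) = n_att_in B (Lbase Dn F x) (AC y) by apply: eq_count; case.
have E2 : n_att_nout B L (AC y) = n_att_nout B (Lbase Dn F x) (AC y) by apply: eq_count; case.
have E3 : n_sup_in B L (AC y) = n_sup_in B (Lbase Dn F x) (AC y) by apply: eq_count; case.
have E4 : n_sup_nout B L (AC y) = n_sup_nout B (Lbase Dn F x) (AC y) by apply: eq_count; case.
by rewrite E1 E2 E3 E4.
Qed.

Lemma class_bicomp y :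
  (L (AC y) = lin <->
       ((forall b, b \in bag_args B -> bag_att B b (AC y) -> L b = lout)
         \/ sup_dom B L (AC y)))
    /\ (L (AC y) = lout <-> att_dom B L (AC y)).
Proof.
rewrite Lclass.
case SD: (sup_dom B L (AC y)).
  split; first by split=> // _; right.
  by split=> // AD; case: (sup_att_dom SD AD).
split; last by case: (att_dom B L (AC y)).
split; first by case: (att_dom B L (AC y)).
case=> [H|//]; exfalso; move/negbT: SD; apply/negP.
have [T TF] : exists T, T \in F.
  by case: F Hsize => // T ? _; exists T; rewrite inE eqxx.
have [_ [_ /(_ x Hx) [r [[rT rs] _]]]] := (proj2 HF) T TF.
have Hr : ARule T r \in args by rewrite mem_argsR TF rT.
have Lr : L (ARule T r) = lin by rewrite /= /active rT rs.
have cy : conc r == y.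
  apply/negPn/negP => cy.
  by move: (H _ Hr cy); rewrite Lr.
rewrite /sup_dom.
have -> : n_att_nout B L (AC y) = 0%N.
  rewrite /n_att_nout (@eq_in_count _ _ pred0) ?count_pred0 //.
  move=> b Hb /=; case Hab: (att Dn F b (AC y)) => //=.
  by rewrite (H b Hb Hab).
rewrite /n_sup_in negbK -has_count; apply/hasP; exists (ARule T r) => //.
by apply/andP; split; [exact: cy | rewrite Lr].
Qed.

Lemma cross_cnt y y' : y != y' ->
  (n_sup_in B L (AC y) <= n_att_in B L (AC y'))%N /\
  (n_sup_nout B L (AC y) <= n_att_nout B L (AC y'))%N.
Proof.
move=> ne; split; apply: sub_count; case=> //= T r /andP [/eqP -> ->];
  by rewrite andbT.
Qed.

Lemma in_le_nout a : (n_att_in B L a <= n_att_nout B L a)%N.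
Proof. by apply: sub_count => b /andP [-> /in_nout]. Qed.
Lemma sin_le_snout a : (n_sup_in B L a <= n_sup_nout B L a)%N.
Proof. by apply: sub_count => b /andP [-> /in_nout]. Qed.

Lemma lin_sd y : L (AC y) = lin -> sup_dom B L (AC y).
Proof.
rewrite Lclass; case: (sup_dom _ _ _) => //; by case: (att_dom _ _ _).
Qed.

Lemma class_uniq y y' : L (AC y) = lin -> L (AC y') = lin -> y = y'.
Proof.
move=> /lin_sd S1 /lin_sd S2; apply/eqP/negP => /negP ne.
have [c1 _] := cross_cnt ne.
have [c2 _] : (n_sup_in B L (AC y') <= n_att_in B L (AC y))%N /\
  (n_sup_nout B L (AC y') <= n_att_nout B L (AC y))%N by apply: cross_cnt; rewrite eq_sym.
move: S1 S2; rewrite /sup_dom.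
have := in_le_nout (AC y); have := in_le_nout (AC y'); lia.
Qed.

Lemma class_out y : L (AC y) = lin -> forall y', y' != y -> L (AC y') = lout.
Proof.
move=> Hy y' ne; rewrite Lclass.
case S2: (sup_dom B L (AC y')).
  have S1 := lin_sd Hy.
  have : L (AC y') = lin by rewrite Lclass S2.
  by move/(class_uniq Hy) => E; rewrite E eqxx in ne.
have [_ c1] := cross_cnt ne.
have [c2 _] : (n_sup_in B L (AC y) <= n_att_in B L (AC y'))%N /\
  (n_sup_nout B L (AC y) <= n_att_nout B L (AC y'))%N by apply: cross_cnt; rewrite eq_sym.
have S1 := lin_sd Hy.
move: S1; rewrite /sup_dom /att_dom => S1.
have -> : (n_sup_nout B L (AC y') < n_att_in B L (AC y'))%N by lia.
by [].
Qed.

End Main.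

Unset Implicit Arguments. Set Strict Implicit.

Theorem lemma3 (R : realType) (V C : finType) (k : nat)
  (isnum : 'I_k -> bool) (Dn : 'I_k -> pred R) (Dc : 'I_k -> {set V})
  (F : forest R V C k) :
  is_forest isnum Dn Dc F -> (1 <= size F)%N ->
  forall x : input R V k, in_domain isnum Dn Dc x ->
    bicomplete (BF isnum Dn Dc F) (Lx isnum Dn Dc F x) /\
    (forall y y' : C, Lx isnum Dn Dc F x (@AClass R V C k y) = lin ->
                      Lx isnum Dn Dc F x (@AClass R V C k y') = lin -> y = y') /\
    (forall y : C, Lx isnum Dn Dc F x (@AClass R V C k y) = lin ->
       forall y' : C, y' != y -> Lx isnum Dn Dc F x (@AClass R V C k y') = lout).
Proof.
move=> HF Hs x Hx; split; [|split].
- move=> a; case: a => [y|T r|i v|i j] Ha.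
  + exact: (class_bicomp HF Hx Hs).
  + exact: (rule_bicomp HF Hx Ha).
  + exact: (feat_bicomp HF Hx Ha).
  + exact: (feat_bicomp HF Hx Ha).
- move=> y y'; exact: (class_uniq (Dn:=Dn) (Dc:=Dc) (isnum:=isnum) (x:=x) Hs).
- move=> y; exact: (class_out (Dn:=Dn) (Dc:=Dc) (isnum:=isnum) (x:=x) Hs).
Qed.
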